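(* Let $A,B\in\mathbb{R}$ and let $f=f_1+f_2\mathbf{j}$ on $\mathbb{H}\cong\mathbb{C}^2$ with $f_1=z_1+\overline z_1+z_2+\overline z_2+A$ and $f_2=-z_1-\overline z_1+z_2+\overline z_2+B$. Then $f$ is hyperholomorphic, and its right inverse $f^{-1}$ is hyperholomorphic outside the zero set of $f$. Moreover, for $A=B=0$, the zero set of $f$ is $\{x_1=0,\ x_2=0\}\subset\mathbb{R}^4$, where $z_k=x_k+iy_k$ with $x_k,y_k\in\mathbb{R}$.
   Context: Quaternions are written $q=z_1+z_2\mathbf{j}$ with $z_1,z_2\in\mathbb{C}$, $\mathbf{j}^2=-1$, $z\mathbf{j}=\mathbf{j}\overline z$ for $z\in\mathbb{C}$. A function $f:U\to\mathbb{H}$ is written $f=f_1+f_2\mathbf{j}$ with $f_1,f_2$ complex valued. The right inverse of $f$ is $f^{-1}=(|f_1|^2+|f_2|^2)^{-1}(\overline f_1-f_2\mathbf{j})$, defined where $f\neq0$. The modified Cauchy–Fueter operator is $\mathcal{D}f=\frac12\big(\frac{\partial f_1}{\partial\overline z_1}-\frac{\partial\overline f_2}{\partial z_2}\big)+\mathbf{j}\,\frac12\big(\frac{\partial f_1}{\partial\overline z_2}+\frac{\partial\overline f_2}{\partial z_1}\big)$, and $f$ is hyperholomorphic if $\mathcal{D}f=0$. *)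

(* Defs.v *)
From Stdlib Require Import Reals.
From Coquelicot Require Import Coquelicot.
Open Scope R_scope.

(* A point of H ~ C^2 is a pair (z1, z2) : C * C; a quaternion q = z1 + z2 j
   is likewise represented as the pair (z1, z2). *)
Definition quat := (C * C)%type.

Definition qinv (q : quat) : quat :=
  let N := RtoC (Cmod (fst q) ^ 2 + Cmod (snd q) ^ 2) in
  (Cdiv (Cconj (fst q)) N, Cdiv (Copp (snd q)) N).

Definition pderiv (g : C * C -> C) (p v : C * C) (l : C) : Prop :=
  is_derive (fun t : R => g (Cplus (fst p) (Cmult (RtoC t) (fst v)),
                             Cplus (snd p) (Cmult (RtoC t) (snd v)))) 0 l.

Definition e_x1 : C * C := (RtoC 1, RtoC 0).
Definition e_y1 : C * C := (Ci, RtoC 0).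
Definition e_x2 : C * C := (RtoC 0, RtoC 1).
Definition e_y2 : C * C := (RtoC 0, Ci).

Definition dzbar1 (g : C * C -> C) (p : C * C) (d : C) : Prop :=
  exists gx gy, pderiv g p e_x1 gx /\ pderiv g p e_y1 gy /\
    d = Cmult (RtoC (/2)) (Cplus gx (Cmult Ci gy)).
Definition dzbar2 (g : C * C -> C) (p : C * C) (d : C) : Prop :=
  exists gx gy, pderiv g p e_x2 gx /\ pderiv g p e_y2 gy /\
    d = Cmult (RtoC (/2)) (Cplus gx (Cmult Ci gy)).
Definition dz1 (g : C * C -> C) (p : C * C) (d : C) : Prop :=
  exists gx gy, pderiv g p e_x1 gx /\ pderiv g p e_y1 gy /\
    d = Cmult (RtoC (/2)) (Cminus gx (Cmult Ci gy)).
Definition dz2 (g : C * C -> C) (p : C * C) (d : C) : Prop :=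
  exists gx gy, pderiv g p e_x2 gx /\ pderiv g p e_y2 gy /\
    d = Cmult (RtoC (/2)) (Cminus gx (Cmult Ci gy)).

(* Modified Cauchy-Fueter operator: (D f)(p) = a + j b, where
   a = 1/2 (df1/dzbar1 - d(conj f2)/dz2), b = 1/2 (df1/dzbar2 + d(conj f2)/dz1);
   the relation includes existence of the needed partial derivatives. *)
Definition CF_op (f : C * C -> quat) (p : C * C) (a b : C) : Prop :=
  let f1 := fun z => fst (f z) in
  let f2c := fun z => Cconj (snd (f z)) in
  exists d1 d2 d3 d4,
    dzbar1 f1 p d1 /\ dz2 f2c p d2 /\ dzbar2 f1 p d3 /\ dz1 f2c p d4 /\
    a = Cmult (RtoC (/2)) (Cminus d1 d2) /\
    b = Cmult (RtoC (/2)) (Cplus d3 d4).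

Definition hyperholomorphic_on (U : C * C -> Prop) (f : C * C -> quat) : Prop :=
  forall p, U p -> CF_op f p (RtoC 0) (RtoC 0).

(* Main.v *)
Require Import Defs.
From Stdlib Require Import Reals Lra FunctionalExtensionality.
From Coquelicot Require Import Coquelicot.
Lemma is_derive_C (u w : R -> R) (a b x : R) :
  is_derive u x a -> is_derive w x b ->
  is_derive (fun t => (u t, w t) : C) x ((a, b) : C).
Proof.
intros Hu Hw. unfold is_derive in *.
refine (filterdiff_comp'_2 u w (fun x y => (x,y)) x _ _ (fun x y => (x,y)) Hu Hw _).
apply (filterdiff_ext_lin _ (fun t => t)).
- apply filterdiff_ext with (fun t => t). intros [p q]; reflexivity.
  apply filterdiff_id.
- intros [p q]; reflexivity.
Qed.
Lemma is_derive_split (h : R -> C) (a b x : R) :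
  is_derive (fun t => fst (h t)) x a -> is_derive (fun t => snd (h t)) x b ->
  is_derive h x ((a, b) : C).
Proof.
intros Ha Hb. apply (is_derive_ext (fun t => (fst (h t), snd (h t)))).
intro t; destruct (h t); reflexivity. now apply is_derive_C.
Qed.
Ltac solve_comp := simpl; auto_derive; [try tauto; try lra | reflexivity].
Ltac solve_pd := unfold pderiv; apply is_derive_split; solve_comp.
Ltac solve_w := do 2 eexists; split; [solve_pd | split; [solve_pd | reflexivity]].
Definition qinv' (q : quat) : quat :=
  let N := RtoC (fst (fst q) ^ 2 + snd (fst q) ^ 2 + (fst (snd q) ^ 2 + snd (snd q) ^ 2)) in
  (Cdiv (Cconj (fst q)) N, Cdiv (Copp (snd q)) N).
Lemma qinv_eq q : qinv q = qinv' q.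
Proof.
unfold qinv, qinv', Cmod. rewrite !pow2_sqrt; [reflexivity| |];
 apply Rplus_le_le_0_compat; apply pow2_ge_0.
Qed.
Definition Fq (u w : R) : quat := ((u, 0), (w, 0)).
Lemma D1 (g : R -> C) u w a b : 0 < u^2 + w^2 ->
  (forall t, g t = fst (qinv' (Fq (u + t*a) (w + t*b)))) ->
  is_derive g 0 ((a*(u^2+w^2) - u*(2*u*a+2*w*b))/(u^2+w^2)^2, 0).
Proof.
intros HN Hg. apply (is_derive_ext (fun t => fst (qinv' (Fq (u + t*a) (w + t*b))))).
intro; now rewrite Hg.
apply is_derive_split; simpl; auto_derive.
- repeat split; apply Rgt_not_eq; nra.
- field. try split; apply Rgt_not_eq; nra.
- repeat split; apply Rgt_not_eq; nra.
- field. try split; apply Rgt_not_eq; nra.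
Qed.
Lemma D2 (g : R -> C) u w a b : 0 < u^2 + w^2 ->
  (forall t, g t = Cconj (snd (qinv' (Fq (u + t*a) (w + t*b))))) ->
  is_derive g 0 (-((b*(u^2+w^2) - w*(2*u*a+2*w*b))/(u^2+w^2)^2), 0).
Proof.
intros HN Hg. apply (is_derive_ext (fun t => Cconj (snd (qinv' (Fq (u + t*a) (w + t*b)))))).
intro; now rewrite Hg.
apply is_derive_split; simpl; auto_derive.
- repeat split; apply Rgt_not_eq; nra.
- field. try split; apply Rgt_not_eq; nra.
- repeat split; apply Rgt_not_eq; nra.
- field. try split; apply Rgt_not_eq; nra.
Qed.
Definition F (A B : R) : C * C -> quat := fun p =>
    (Cplus (Cplus (Cplus (Cplus (fst p) (Cconj (fst p))) (snd p)) (Cconj (snd p))) (RtoC A),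
     Cplus (Cplus (Cplus (Cminus (Copp (fst p)) (Cconj (fst p))) (snd p)) (Cconj (snd p))) (RtoC B)).
Definition U A (p : C * C) := 2*fst (fst p) + 2*fst (snd p) + A.
Definition W B (p : C * C) := -2*fst (fst p) + 2*fst (snd p) + B.
Lemma line A B (p v : C * C) t :
  F A B (Cplus (fst p) (Cmult (RtoC t) (fst v)), Cplus (snd p) (Cmult (RtoC t) (snd v)))
  = Fq (U A p + t * (2*fst (fst v) + 2*fst (snd v))) (W B p + t * (-2*fst (fst v) + 2*fst (snd v))).
Proof.
destruct p as [[a1 b1] [a2 b2]]; destruct v as [[c1 d1] [c2 d2]].
unfold F, Fq, U, W; simpl. f_equal; apply injective_projections; simpl; ring.
Qed.
Ltac solve_pd2 D := unfold pderiv; eapply D; [eassumption| intro t; rewrite line; reflexivity].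
Ltac solve_w2 D := do 2 eexists; split; [solve_pd2 D | split; [solve_pd2 D | reflexivity]].
Lemma part2 A B : hyperholomorphic_on (fun p => F A B p <> (RtoC 0, RtoC 0)) (fun p => qinv (F A B p)).
Proof.
intros p Hp.
replace (fun p => qinv (F A B p)) with (fun p => qinv' (F A B p)) by (apply functional_extensionality; intro; now rewrite qinv_eq).
assert (HN : 0 < (U A p)^2 + (W B p)^2).
{ destruct (Rle_lt_dec ((U A p)^2 + (W B p)^2) 0) as [E|E]; [|exact E].
  exfalso. apply Hp. destruct p as [[x1 y1] [x2 y2]]. unfold U, W in *; simpl in *.
  pose proof (pow2_ge_0 (2*x1+2*x2+A)). pose proof (pow2_ge_0 (-2*x1+2*x2+B)).
  assert (E1: (2*x1+2*x2+A)^2 = 0) by lra. assert (E2: (-2*x1+2*x2+B)^2 = 0) by lra.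
  assert (2*x1+2*x2+A = 0) by (destruct (Req_dec (2*x1+2*x2+A) 0) as [?|N1]; [auto|now apply (pow_nonzero _ 2) in N1]).
  assert (-2*x1+2*x2+B = 0) by (destruct (Req_dec (-2*x1+2*x2+B) 0) as [?|N1]; [auto|now apply (pow_nonzero _ 2) in N1]).
  unfold F; f_equal; apply injective_projections; simpl; lra. }
clear Hp.
unfold CF_op.
do 4 eexists. split; [solve_w2 D1|]. split; [solve_w2 D2|]. split; [solve_w2 D1|]. split; [solve_w2 D2|].
simpl. set (u := U A p) in *. set (w := W B p) in *.
split; apply injective_projections; simpl; field; apply Rgt_not_eq; nra.
Qed.

Theorem proposition3p3 (A B : R) :
  let f : C * C -> quat := fun p =>
    (Cplus (Cplus (Cplus (Cplus (fst p) (Cconj (fst p))) (snd p)) (Cconj (snd p))) (RtoC A),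
     Cplus (Cplus (Cplus (Cminus (Copp (fst p)) (Cconj (fst p))) (snd p)) (Cconj (snd p))) (RtoC B)) in
  hyperholomorphic_on (fun _ => True) f /\
  hyperholomorphic_on (fun p => f p <> (RtoC 0, RtoC 0)) (fun p => qinv (f p)) /\
  (A = 0%R -> B = 0%R ->
     forall p : C * C, f p = (RtoC 0, RtoC 0) <-> (fst (fst p) = 0%R /\ fst (snd p) = 0%R)).
Proof.
intros f. split; [|split].
- intros p _. unfold CF_op, f.
  do 4 eexists. split; [solve_w|]. split; [solve_w|]. split; [solve_w|]. split; [solve_w|].
  split; apply injective_projections; simpl; field.
- exact (part2 A B).
- intros -> -> [[x1 y1] [x2 y2]]. unfold f; simpl. split.
  + intro E. injection E. intros. lra.
  + intros [-> ->]. f_equal; apply injective_projections; simpl; ring.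
Qed.
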